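(* Suppose $\tau_L > \delta_L + 1$ and $\delta_L > 0$. Let $K = \left[ -\lambda_L^s, m_{\rm max} \right]$ for some $m_{\rm max} \ge 0$. (i) If $m_{\rm max} \le m_{\rm crit}$ then $\Psi_K$ is invariant and expanding for $A_L$ with expansion factor $\lambda_L^u$. (ii) If $m_{\rm max} \le 1$ then $\Psi_K$ is invariant and expanding for $A_L$ with expansion factor $c_L = \min \left\{ \lambda_L^u, \frac{\lambda_L^u + 1}{\sqrt{2}} \right\}$.
   Context: Let $A_L = \begin{bmatrix} \tau_L & 1 \\ -\delta_L & 0 \end{bmatrix}$ with $\tau_L > \delta_L + 1$, $\delta_L > 0$, so its eigenvalues satisfy $0 < \lambda_L^s < 1 < \lambda_L^u$. Define $m_{\rm crit} = \lambda_L^s + \frac{2 \tau_L}{(\lambda_L^u)^2 - 1}$ (which is positive); it is the unique value $m \neq -\lambda_L^s$ for which $\|A_L v\| = \lambda_L^u \|v\|$ with $v = (1, m)^T$. A set $C \subset \mathbb{R}^2$ is a cone if $tv \in C$ for all $v \in C$, $t \in \mathbb{R}$. For an interval $K \subset \mathbb{R}$, $\Psi_K = \{ t (1, m)^T \mid m \in K, t \in \mathbb{R} \}$ (the cone of vectors with slope in $K$). A cone $C$ is invariant for a $2\times 2$ matrix $A$ if $Av \in C$ for all $v \in C$, and expanding with expansion factor $c > 1$ if $\|Av\| \ge c \|v\|$ for all $v \in C$ (Euclidean norm). *)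

(* Defs.v *)
From Stdlib Require Import Reals Lra.
Open Scope R_scope.

Record mat2 := Mat2 { m11 : R; m12 : R; m21 : R; m22 : R }.

Definition mapply (A : mat2) (v : R * R) : R * R :=
  (m11 A * fst v + m12 A * snd v, m21 A * fst v + m22 A * snd v).

Definition norm2 (v : R * R) : R := sqrt (fst v ^ 2 + snd v ^ 2).

Definition A_L (tau delta : R) : mat2 := Mat2 tau 1 (- delta) 0.

(* eigenvalues of A_L: roots of lambda^2 - tau lambda + delta = 0 *)
Definition lam_s (tau delta : R) : R := (tau - sqrt (tau ^ 2 - 4 * delta)) / 2.
Definition lam_u (tau delta : R) : R := (tau + sqrt (tau ^ 2 - 4 * delta)) / 2.

Definition m_crit (tau delta : R) : R :=
  lam_s tau delta + 2 * tau / (lam_u tau delta ^ 2 - 1).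

Definition Psi (K : R -> Prop) : R * R -> Prop :=
  fun v => exists m t, K m /\ v = (t * 1, t * m).

Definition is_cone (C : R * R -> Prop) : Prop :=
  forall v t, C v -> C (t * fst v, t * snd v).

Definition invariant (A : mat2) (C : R * R -> Prop) : Prop :=
  forall v, C v -> C (mapply A v).

Definition expanding (A : mat2) (C : R * R -> Prop) (c : R) : Prop :=
  1 < c /\ forall v, C v -> norm2 (mapply A v) >= c * norm2 v.

(* Main.v *)
Require Import Defs.
From Stdlib Require Import Reals Lra.
Open Scope R_scope.

Lemma quad_nonneg (al be ga a b m : R) :
  al <= 0 -> a <= m <= b ->
  0 <= al*a*a + be*a + ga -> 0 <= al*b*b + be*b + ga ->
  0 <= al*m*m + be*m + ga.
Proof.
  intros Hal [H1 H2] Ha Hb.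
  destruct (Req_dec a b) as [E|E].
  - subst. replace m with b by lra. lra.
  - assert (Hba : b - a > 0) by lra.
    assert (Hid : (b-a)*(al*m*m + be*m + ga) =
       (al*a*a + be*a + ga)*(b-m) + (al*b*b + be*b + ga)*(m-a)
       + (b-a)*(-al)*(m-a)*(b-m)) by ring.
    assert (0 <= (b-a)*(-al)*(m-a)*(b-m)).
    { apply Rmult_le_pos; [apply Rmult_le_pos; [apply Rmult_le_pos|]|]; lra. }
    assert (0 <= (al*a*a + be*a + ga)*(b-m)) by (apply Rmult_le_pos; lra).
    assert (0 <= (al*b*b + be*b + ga)*(m-a)) by (apply Rmult_le_pos; lra).
    assert (0 <= (b-a)*(al*m*m + be*m + ga)) by lra.
    destruct (Rle_or_lt 0 (al*m*m + be*m + ga)) as [|Hn]; auto.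
    exfalso. assert ((b-a)*(al*m*m + be*m + ga) < 0).
    { rewrite Rmult_comm. apply Rmult_neg_pos; lra. } lra.
Qed.

Lemma sqrt_ge_c (X Y c : R) : 0 < c -> 0 <= Y -> c*c*Y <= X ->
  sqrt X >= c * sqrt Y.
Proof.
  intros Hc HY H.
  assert (c * sqrt Y = sqrt (c*c*Y)).
  { rewrite sqrt_mult_alt by nra. rewrite sqrt_square by lra. reflexivity. }
  rewrite H0. apply Rle_ge, sqrt_le_1_alt; lra.
Qed.

Section S.
Variables tau delta : R.
Hypothesis Ht : tau > delta + 1.
Hypothesis Hd : delta > 0.
Let s := sqrt (tau ^ 2 - 4 * delta).

Lemma s_facts : 0 <= s /\ s * s = tau^2 - 4*delta.
Proof.
  split. apply sqrt_pos. unfold s. apply sqrt_sqrt. assert (tau*tau > (delta+1)*(delta+1)) by nra. assert (0 <= (delta-1)*(delta-1)) by apply Rle_0_sqr. simpl. lra.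
Qed.

Lemma eig_facts : lam_s tau delta + lam_u tau delta = tau /\
  lam_s tau delta * lam_u tau delta = delta /\
  1 < lam_u tau delta /\ 0 < lam_s tau delta /\ lam_s tau delta < 1.
Proof.
  destruct s_facts as [H0 H1].
  unfold lam_s, lam_u. fold s.
  assert (Hp : (tau - s)/2 * ((tau + s)/2) = delta) by nra.
  assert (Hq : ((tau+s)/2 - 1)*(1 - (tau-s)/2) = tau - delta - 1) by nra.
  assert (1 < (tau + s)/2) by nra.
  repeat split; try lra; nra.
Qed.

Lemma invariance (m_max : R) : 0 <= m_max ->
  invariant (A_L tau delta) (Psi (fun m => - lam_s tau delta <= m <= m_max)).
Proof.
  destruct eig_facts as (E1 & E2 & E3 & E4 & E5).
  intros Hmm v (m & t & [Hm1 Hm2] & ->).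
  unfold mapply, A_L; simpl.
  set (ls := lam_s tau delta) in *. set (lu := lam_u tau delta) in *.
  assert (Hp : tau + m >= lu) by lra.
  exists (- delta / (tau + m)), (t * (tau + m)).
  split; [split|].
  - assert (delta / (tau+m) <= ls).
    { apply (Rmult_le_reg_r (tau+m)); [lra|]. unfold Rdiv.
      rewrite Rmult_assoc, Rinv_l by lra. nra. }
    replace (-delta/(tau+m)) with (-(delta/(tau+m))) by (field; lra). lra.
  - assert (0 < delta / (tau+m)) by (apply Rdiv_lt_0_compat; lra).
    replace (-delta/(tau+m)) with (-(delta/(tau+m))) by (field; lra). lra.
  - f_equal. ring. field. lra.
Qed.

Lemma expansion (m_max c : R) :
  0 < c -> (forall m, - lam_s tau delta <= m <= m_max ->
      c*c*(1 + m*m) <= (tau+m)*(tau+m) + delta*delta) ->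
  forall v, Psi (fun m => - lam_s tau delta <= m <= m_max) v ->
  norm2 (mapply (A_L tau delta) v) >= c * norm2 v.
Proof.
  intros Hc H v (m & t & Hm & ->).
  unfold norm2, mapply, A_L; simpl.
  apply sqrt_ge_c; auto. nra.
  specialize (H m Hm).
  assert (0 <= (t*t)*((tau+m)*(tau+m) + delta*delta - c*c*(1+m*m))).
  { apply Rmult_le_pos. apply Rle_0_sqr. lra. }
  nra.
Qed.
End S.

Theorem lemma4p1 (tau delta m_max : R) :
  tau > delta + 1 -> delta > 0 -> 0 <= m_max ->
  let K := fun m => - lam_s tau delta <= m <= m_max in
  (m_max <= m_crit tau delta ->
     invariant (A_L tau delta) (Psi K) /\
     expanding (A_L tau delta) (Psi K) (lam_u tau delta)) /\
  (m_max <= 1 ->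
     invariant (A_L tau delta) (Psi K) /\
     expanding (A_L tau delta) (Psi K)
       (Rmin (lam_u tau delta) ((lam_u tau delta + 1) / sqrt 2))).
Proof.
  intros Ht Hd Hm K.
  destruct (eig_facts tau delta Ht Hd) as (E1 & E2 & E3 & E4 & E5).
  set (ls := lam_s tau delta) in *. set (lu := lam_u tau delta) in *.
  assert (Hlu2 : 1 < lu*lu).
  { replace 1 with (1*1) by ring. apply Rmult_le_0_lt_compat; lra. }
  split; intros Hmax; (split; [apply invariance; auto|]).
  - split; [lra|]. apply expansion; auto. lra.
    intros m [Hm1 Hm2].
    set (k := 2 * tau / (lu ^ 2 - 1)).
    assert (Hk : k * (lu*lu - 1) = 2*tau).
    { unfold k. field. simpl. lra. }
    assert (Hmc : m_crit tau delta = ls + k) by reflexivity.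
    rewrite Hmc in Hmax. change (-ls <= m) in Hm1. clearbody k ls lu.
    assert (0 <= (1 - lu*lu)*m*m + (2*tau)*m + (tau*tau + delta*delta - lu*lu)).
    { apply (quad_nonneg _ _ _ (-ls) (ls + k)).
      lra. lra.
      assert (tau = ls + lu) by lra. subst tau. rewrite <- E2. ring_simplify. lra.
      assert (tau = ls + lu) by lra.
      replace ((1 - lu * lu) * (ls + k) * (ls + k) + 2 * tau * (ls + k) +
                 (tau * tau + delta * delta - lu * lu))
      with ((1 - lu * lu) * (-ls) * (-ls) + 2 * tau * (-ls) +
                 (tau * tau + delta * delta - lu * lu)
            + (2*ls + k) * ((1 - lu*lu) * k + 2*tau)) by ring.
      rewrite <- E2. subst tau. nra. }
    nra.
  - assert (Hs2 : 0 < sqrt 2) by (apply sqrt_lt_R0; lra).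
    assert (Hs2' : sqrt 2 * sqrt 2 = 2) by (apply sqrt_sqrt; lra).
    assert (Hw : 1 < (lu + 1) / sqrt 2).
    { apply (Rmult_lt_reg_r (sqrt 2)); auto. unfold Rdiv.
      rewrite Rmult_assoc, Rinv_l by lra. nra. }
    set (c := Rmin lu ((lu + 1) / sqrt 2)).
    assert (Hc1 : 1 < c) by (unfold c; apply Rmin_glb_lt; lra).
    assert (Hc2 : c <= lu) by apply Rmin_l.
    assert (Hc3 : c <= (lu + 1) / sqrt 2) by apply Rmin_r.
    assert (Hc4 : c * c * 2 <= (lu+1)*(lu+1)).
    { assert (c * sqrt 2 <= lu + 1).
      { apply (Rmult_le_compat_r (sqrt 2)) in Hc3; [|lra].
        unfold Rdiv in Hc3. rewrite Rmult_assoc, Rinv_l in Hc3 by lra. lra. }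
      assert (0 <= c * sqrt 2) by (apply Rmult_le_pos; lra).
      assert (c*sqrt 2 * (c*sqrt 2) <= (lu+1)*(lu+1)) by (apply Rmult_le_compat; lra).
      replace (c*sqrt 2 * (c*sqrt 2)) with (c*c*(sqrt 2 * sqrt 2)) in H1 by ring.
      rewrite Hs2' in H1. lra. }
    split; [lra|]. apply expansion; auto. lra.
    intros m [Hm1 Hm2]. change (-ls <= m) in Hm1. clearbody c ls lu.
    assert (0 <= (1 - c*c)*m*m + (2*tau)*m + (tau*tau + delta*delta - c*c)).
    { apply (quad_nonneg _ _ _ (-ls) 1).
      nra. lra.
      assert (tau = ls + lu) by lra. subst tau.
      assert (c*c <= lu*lu) by nra. nra.
      assert (tau = ls + lu) by lra. subst tau. nra. }
    nra.
Qed.
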